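(* Let $K\ge1$, fix $j\in\{1,\dots,K\}$, let $\lambda_j>0$, $\mu_j>0$ and $\rho_j=\lambda_j/\mu_j$. Let $f:\mathbb{Z}_{\ge0}^K\to\mathbb{R}$ be any function. For $\bar q=(q_1,\dots,q_K)\in\mathbb{Z}_{\ge0}^K$ define $$H(\bar q)=\frac{1}{\mu_j}\cdot\frac{1}{\rho_j}\sum_{i=1}^{q_j}\sum_{m=0}^{q_j-i} f\big(\bar q-(i+m)e_j\big)\frac{(q_j-i)!}{(q_j-i-m)!}\rho_j^{-m},$$ where $e_j$ is the $j$-th unit vector (so $H(\bar q)=0$ when $q_j=0$). Then for every $\bar q\in\mathbb{Z}_{\ge0}^K$, $$\lambda_j\big(H(\bar q+e_j)-H(\bar q)\big)-\mu_j q_j\big(H(\bar q)-H(\bar q-e_j)\big)=f(\bar q),$$ where the second term is interpreted as $0$ when $q_j=0$. *)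

(* Defs.v *)
From mathcomp Require Import all_boot all_order all_algebra.
Set Implicit Arguments. Unset Strict Implicit. Unset Printing Implicit Defensive.
Import Order.TTheory GRing.Theory Num.Theory.
Local Open Scope ring_scope.

(* q - n e_j  (only used with n <= q_j, so truncation never happens there) *)
Definition subej (K : nat) (j : 'I_K) (n : nat) (q : {ffun 'I_K -> nat})
  : {ffun 'I_K -> nat} :=
  [ffun k => if k == j then (q k - n)%N else q k].

Definition addej (K : nat) (j : 'I_K) (q : {ffun 'I_K -> nat})
  : {ffun 'I_K -> nat} :=
  [ffun k => if k == j then (q k).+1 else q k].

Definition Hfun (R : realFieldType) (K : nat) (j : 'I_K) (lam mu : R)
  (f : {ffun 'I_K -> nat} -> R) (q : {ffun 'I_K -> nat}) : R :=
  let rho := lam / mu in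
  mu^-1 * rho^-1 *
  \sum_(1 <= i < (q j).+1) \sum_(0 <= m < (q j - i).+1)
     f (subej j (i + m) q) * (((q j - i)`!)%:R / ((q j - i - m)`!)%:R)
       * rho ^- m.

(* Main.v *)
Require Import Defs.
From mathcomp Require Import all_boot all_order all_algebra.
From mathcomp Require Import ring lra.
Import Order.TTheory GRing.Theory Num.Theory.
Set Implicit Arguments. Unset Strict Implicit.
Local Open Scope ring_scope.

Definition setj (K : nat) (j : 'I_K) (q : {ffun 'I_K -> nat}) (s : nat) : {ffun 'I_K -> nat} :=
  [ffun k => if k == j then s else q k].

Definition G (R : realFieldType) (rho : R) (F : nat -> R) (a : nat) : R :=
  \sum_(0 <= m < a.+1) F (a - m)%N * ((a`!)%:R / ((a - m)`!)%:R) * rho ^- m.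

Lemma subej_setj K (j : 'I_K) k q : subej j k q = setj j q (q j - k)%N.
Proof. by apply/ffunP=> x; rewrite !ffunE; case: eqP => // ->. Qed.

Lemma setj_addej K (j : 'I_K) q s : setj j (addej j q) s = setj j q s.
Proof. by apply/ffunP=> x; rewrite !ffunE; case: eqP. Qed.

Lemma setj_subej K (j : 'I_K) q k s : setj j (subej j k q) s = setj j q s.
Proof. by apply/ffunP=> x; rewrite !ffunE; case: eqP. Qed.

Lemma setj_id K (j : 'I_K) q : setj j q (q j) = q.
Proof. by apply/ffunP=> x; rewrite !ffunE; case: eqP => // ->. Qed.

Lemma Hfun_G (R : realFieldType) K (j : 'I_K) (lam mu : R) f q :
  0 < lam -> 0 < mu ->
  Hfun j lam mu f q = lam^-1 * \sum_(0 <= a < q j) G (lam / mu) (fun s => f (setj j q s)) a.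
Proof.
move=> hl hm; rewrite /Hfun /G.
have -> : mu^-1 * (lam / mu)^-1 = lam^-1.
  by field; apply/andP; split; rewrite gt_eqF.
congr (_ * _).
rewrite [RHS]big_nat_rev /= add0n.
rewrite big_add1 /=.
apply: eq_big_nat => a /andP[_ ha].
apply: eq_big_nat => m /andP[_ hmm].
by rewrite subej_setj subnDA.
Qed.

Lemma GS (R : realFieldType) (rho : R) F n : rho != 0 ->
  G rho F n.+1 = F n.+1 + (n.+1)%:R / rho * G rho F n.
Proof.
move=> hr; rewrite /G big_nat_recl // subn0 expr0 invr1 mulr1 divff ?mulr1;
  last by rewrite pnatr_eq0 -lt0n fact_gt0.
congr (_ + _); rewrite big_distrr /=; apply: eq_big_nat => m /andP[_ hm].
rewrite subSS factS natrM exprS invfM.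
have h1 : (n - m)`!%:R != 0 :> R by rewrite pnatr_eq0 -lt0n fact_gt0.
field; rewrite hr h1 /=.
by rewrite expf_neq0.
Qed.

Lemma Hfun_G' (R : realFieldType) K (j : 'I_K) (lam mu : R) f q q' :
  0 < lam -> 0 < mu -> (forall s, setj j q' s = setj j q s) ->
  Hfun j lam mu f q' = lam^-1 * \sum_(0 <= a < q' j) G (lam / mu) (fun s => f (setj j q s)) a.
Proof.
move=> hl hm hq; rewrite Hfun_G //; congr (_ * _); apply: eq_bigr => a _.
by rewrite /G; apply: eq_bigr => m _; rewrite hq.
Qed.

Theorem lemma3 (R : realFieldType) (K : nat) (j : 'I_K) (lam mu : R)
  (hlam : 0 < lam) (hmu : 0 < mu) (f : {ffun 'I_K -> nat} -> R)
  (q : {ffun 'I_K -> nat}) :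
  lam * (Hfun j lam mu f (addej j q) - Hfun j lam mu f q)
  - (if q j == 0%N then 0
     else mu * (q j)%:R * (Hfun j lam mu f q - Hfun j lam mu f (subej j 1 q)))
  = f q.
Proof.
rewrite (Hfun_G' (q:=q) f hlam hmu (setj_addej j q)).
rewrite (Hfun_G' (q:=q) f hlam hmu (fun s => erefl)).
rewrite (Hfun_G' (q:=q) f hlam hmu (setj_subej j q 1)).
have ha : addej j q j = (q j).+1 by rewrite ffunE eqxx.
have hs : subej j 1 q j = (q j - 1)%N by rewrite ffunE eqxx.
rewrite ha hs big_nat_recr //=.
set F := fun s => f (setj j q s).
have hF : F (q j) = f q by rewrite /F setj_id.
have hl0 : lam != 0 by rewrite gt_eqF.
have hm0 : mu != 0 by rewrite gt_eqF.
have hr0 : lam / mu != 0 by rewrite mulf_neq0 // invr_eq0.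
case E: (q j) hF => [|n] hF /=.
  rewrite big_geq // /G big_nat1 subn0 expr0 invr1 -hF /=.
  by rewrite fact0 mulr1 !mulr1 add0r mulr0 !subr0 mulrA divff // mul1r.
rewrite subSS subn0 GS // hF.
set S := \sum_(0 <= i < n.+1) _.
set T := \sum_(0 <= i < n) _.
set g := G _ _ n.
have hS : S = T + g by rewrite /S big_nat_recr.
rewrite hS; set N := (n.+1)%:R.
field; rewrite hl0 hm0 //=.
Qed.
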